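(* Consider the linear difference equation in an unknown sequence $\{x(n)\}_{n \in \mathbb{Z}}$ \[ a_r(n) x(n + r) + \ldots + a_1(n) x(n + 1) + a_0(n) x(n) = 0 \quad \text{for every } n \in \mathbb{Z}, \] where $\{a_0(n)\}_{n\in\mathbb{Z}}, \ldots, \{a_r(n)\}_{n\in\mathbb{Z}}$ are arbitrary numerical sequences. Assume that the space $W$ of solutions of this equation whose support $\operatorname{supp}(\{x(n)\}) = \{i \in \mathbb{Z} \mid x(i) \neq 0\}$ is contained in $\mathbb{Z}_{\geqslant 0}$ is infinite-dimensional. Then there exists an index $J > 0$ such that this equation has a nonzero solution with support contained in $\{1, 2, \ldots, J\}$.
   Context: Solutions are two-sided numerical sequences indexed by $\mathbb{Z}$; the coefficients are arbitrary sequences (no nonvanishing assumption on $a_0$ or $a_r$), and the number $r$ is the order of the equation. The solution set is a vector space. *)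

(* Defs.v *)
From mathcomp Require Import all_boot all_order all_algebra.
Set Implicit Arguments. Unset Strict Implicit. Unset Printing Implicit Defensive.
Import Order.TTheory GRing.Theory Num.Theory.
Local Open Scope ring_scope.

Definition is_solution (K : fieldType) (r : nat) (a : nat -> int -> K)
  (x : int -> K) : Prop :=
  forall n : int, \sum_(i < r.+1) a i n * x (n + (i : nat)%:Z) = 0.

Definition supp_sub (K : fieldType) (x : int -> K) (S : int -> Prop) : Prop :=
  forall n : int, x n != 0 -> S n.

Definition lin_indep (K : fieldType) (m : nat) (f : 'I_m -> int -> K) : Prop :=
  forall c : 'I_m -> K,
    (forall n : int, \sum_(i < m) c i * f i n = 0) -> forall i, c i = 0.

Definition infinite_dimensional (K : fieldType) (W : (int -> K) -> Prop) : Prop :=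
  forall m : nat, exists f : 'I_m -> int -> K,
    (forall i, W (f i)) /\ lin_indep f.

(* Main.v *)
Require Import Defs.
From mathcomp Require Import all_boot all_order all_algebra.
From mathcomp Require Import zify.
From Stdlib Require Import Classical.
Import Order.TTheory GRing.Theory Num.Theory.
Local Open Scope ring_scope.

Definition evm {K : fieldType} {m : nat} (N : nat) (f : 'I_m -> int -> K) : 'M[K]_(m, N.+1) :=
  \matrix_(i, j) f i (nat_of_ord j)%:Z.

Lemma evmP {K : fieldType} {m N : nat} {f : 'I_m -> int -> K} {c : 'rV[K]_m} :
  c *m evm N f = 0 -> forall k : nat, (k <= N)%N -> \sum_i c 0 i * f i k%:Z = 0.
Proof.
move=> /matrixP H k hk.
have := H 0 (Ordinal (hk : (k < N.+1)%N)); rewrite !mxE => h.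
rewrite -[X in _ = X]h.
by apply: eq_bigr => i _; rewrite mxE.
Qed.

Lemma evmP2 {K : fieldType} {m N : nat} {f : 'I_m -> int -> K} {c : 'rV[K]_m} :
  (forall k : nat, (k <= N)%N -> \sum_i c 0 i * f i k%:Z = 0) -> c *m evm N f = 0.
Proof.
move=> H; apply/matrixP => i j; rewrite ord1 [RHS]mxE -[X in _ = X](H j) ?(ltn_ord j) //.
- by rewrite mxE; apply: eq_bigr => l _; rewrite mxE.
- by rewrite -ltnS.
Qed.

Lemma ker_mono {K : fieldType} {m N N' : nat} {f : 'I_m -> int -> K} :
  (N <= N')%N -> (kermx (evm N' f) <= kermx (evm N f))%MS.
Proof.
move=> hN; apply/rV_subP => v; rewrite !sub_kermx => /eqP hv; apply/eqP.
apply: evmP2 => k hk; apply: (evmP hv); exact: leq_trans hk hN.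
Qed.

Lemma stable_good {K : fieldType} {m : nat} {f : 'I_m -> int -> K} N :
  (forall i (n : int), n < 0 -> f i n = 0) -> lin_indep f ->
  (forall N', (kermx (evm N f) <= kermx (evm N' f))%MS) ->
  forall c : 'rV[K]_m, c *m evm N f = 0 -> c = 0.
Proof.
move=> hneg hind hall c hc.
have hker : kermx (evm N f) = 0.
  apply/row_matrixP => i; rewrite row0.
  set r0 := row i _.
  have hr : forall N', r0 *m evm N' f = 0.
    move=> N'; apply/eqP; rewrite -sub_kermx.
    exact: submx_trans (row_sub i _) (hall N').
  apply/rowP => j; rewrite [in RHS]mxE.
  apply: (hind (fun j => r0 0 j)) => -[n|n].
    exact: (evmP (hr n) n (leqnn n)).
  by rewrite big1 // => l _; rewrite hneg ?mulr0.
apply/eqP; rewrite -submx0 -hker sub_kermx; exact/eqP.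
Qed.

Lemma good_exists {K : fieldType} {m : nat} {f : 'I_m -> int -> K} :
  (forall i (n : int), n < 0 -> f i n = 0) -> lin_indep f ->
  forall k N, (\rank (kermx (evm N f)) <= k)%N ->
  exists N0, forall c : 'rV[K]_m, c *m evm N0 f = 0 -> c = 0.
Proof.
move=> hneg hind; elim=> [|k IH] N hk;
  (case: (classic (forall N', (kermx (evm N f) <= kermx (evm N' f))%MS)) => [hall|hnot];
  [ by exists N; apply: stable_good | ]);
  move/not_all_ex_not: hnot => [N' hN'];
  (have hle : (N < N')%N by
      rewrite ltnNge; apply/negP => h; apply: hN'; exact: ker_mono);
  (have hlt : (\rank (kermx (evm N' f)) < \rank (kermx (evm N f)))%N by
      apply: rank_ltmx; rewrite ltmxE ker_mono ?(ltnW hle) //=; exact/negP).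
- by move: hlt; rewrite ltnNge (leq_trans hk).
- apply: (IH N'); move: hlt hk; lia.
Qed.

Theorem lemma2 (K : fieldType) (r : nat) (a : nat -> int -> K) :
  infinite_dimensional
    (fun x : int -> K => is_solution r a x /\ supp_sub x (fun n => 0 <= n)) ->
  exists J : nat, (0 < J)%N /\
    exists x : int -> K,
      is_solution r a x /\ (exists n : int, x n != 0) /\
      supp_sub x (fun n => 1 <= n <= J%:Z).
Proof.
move=> /(_ r.+2) [f [hW hind]].
have hneg : forall i (n : int), n < 0 -> f i n = 0.
  move=> i n hn; apply/eqP; apply/negP => /negP h.
  have := (hW i).2 n h; rewrite leNgt hn //.
have [N0 hN0] := good_exists hneg hind (\rank (kermx (evm 0 f))) 0 (leqnn _).
set J := N0.+1.
pose pt (k : 'I_r.+1) : int := if (k : nat) == 0%N then 0 else (J + k)%N%:Z.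
pose B : 'M[K]_(r.+2, r.+1) := \matrix_(i, k) f i (pt k).
have hB : kermx B != 0.
  rewrite -mxrank_eq0 mxrank_ker; have := rank_leq_col B; lia.
have [i0 hi0] : exists i0, row i0 (kermx B) != 0.
  apply: NNPP => hall; move/negP: hB; apply; apply/eqP.
  apply/row_matrixP => i; rewrite row0; apply/eqP; apply/negP => /negP h.
  by apply: hall; exists i.
set c := row i0 (kermx B).
have hcB : c *m B = 0 by rewrite /c -row_mul mulmx_ker row0.
pose x (n : int) := \sum_j c 0 j * f j n.
have hxpt : forall k, x (pt k) = 0.
  move=> k; move/matrixP: hcB => /(_ 0 k); rewrite !mxE => h.
  rewrite -[X in _ = X]h /x; apply: eq_bigr => j _; by rewrite /B [X in _ = _ * X]mxE.
have hxneg : forall n, n < 0 -> x n = 0.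
  by move=> n hn; rewrite /x big1 // => j _; rewrite hneg ?mulr0.
have hxz : forall t : int, J%:Z < t -> t <= (J + r)%N%:Z -> x t = 0.
  move=> t h1 h2.
  have hk : (`|t|%N - J < r.+1)%N by lia.
  have -> : t = pt (Ordinal hk) by rewrite /pt /=; case: ifP => /eqP; lia.
  exact: hxpt.
have hxsol : is_solution r a x.
  move=> n; rewrite /x.
  under eq_bigr => i _ do rewrite big_distrr /=.
  rewrite exchange_big /= big1 // => j _.
  under eq_bigr => i _ do rewrite mulrCA.
  by rewrite -big_distrr /= (hW j).1 mulr0.
have [n0 [hn0 hxn0]] : exists n0 : nat, (n0 <= N0)%N /\ x n0%:Z != 0.
  apply: NNPP => hall.
  have : c = 0.
    apply: hN0; apply: evmP2 => k hk.
    by apply/eqP; apply/negP => /negP h; apply: hall; exists k.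
  by move/eqP; rewrite (negbTE hi0).
pose y (n : int) := if n <= J%:Z then x n else 0.
exists J; split => //; exists y; split; last split.
- move=> n; rewrite /y.
  case: (boolP (n <= J%:Z)) => hn.
    rewrite -[X in _ = X](hxsol n); apply: eq_bigr => i _.
    case: ifP => // /negbT hi; rewrite hxz //; first lia.
    have := ltn_ord i; lia.
  by rewrite big1 // => i _; rewrite ifF ?mulr0 //; apply/negbTE; lia.
- by exists n0%:Z; rewrite /y ifT //; lia.
- move=> n; rewrite /y; case: ifP => hn hx; last by rewrite eqxx in hx.
  have h0 : 0 <= n by rewrite leNgt; apply/negP => h; move: hx; rewrite hxneg ?eqxx.
  have : n != 0.
    apply/eqP => e; move: hx; rewrite e.
    have := hxpt ord0; rewrite /pt /= => ->; rewrite eqxx.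
    by [].
  lia.
Qed.
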